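(* Let $(\bar z_1,\bar z_2)\in\mathbb R^d\times\mathbb R^d$. Then $(\bar z_1,\bar z_2)\in \operatorname{Fix} T_{\gamma}^{\mathrm{Ryu}} := \{(z_1,z_2): (z_1,z_2)\in T_{\gamma}^{\mathrm{Ryu}}(z_1,z_2)\}$ if and only if $\bar x := \bar x_1=\bar x_2=\bar x_3$, where $$\bar x_1=\operatorname{prox}_{\gamma f_1}(\bar z_1),\quad \bar x_2=\operatorname{prox}_{\frac{\gamma}{\alpha} f_2}\Big(\tfrac{\bar z_2}{\alpha}+\bar x_1\Big),\quad \bar x_3\in \operatorname{prox}_{\gamma f_3}(\bar x_1-\bar z_1+\bar x_2-\bar z_2).$$ Furthermore, such $\bar x$ is a critical point of $\varphi$ (i.e. $0\in\partial\varphi(\bar x)$), and $\varphi(\bar x)=\varphi_{\gamma}^{\mathrm{Ryu}}(\bar z_1,\bar z_2)$. In particular, if $\alpha\in(0,1)$ and $\gamma\le \min\{\frac{\alpha}{L_1},\frac{1-\alpha}{L_2}\}$, then $\min\varphi=\min\varphi_{\gamma}^{\mathrm{Ryu}}$.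
   Context: Let $f_1,f_2:\mathbb R^d\to\mathbb R$ be convex and $L_i$-smooth (i.e. differentiable with $\nabla f_i$ globally $L_i$-Lipschitz, $L_i>0$), let $f_3:\mathbb R^d\to\mathbb R\cup\{+\infty\}$ be proper and lower semicontinuous, and suppose the problem $\min_{x\in\mathbb R^d}\varphi(x):=f_1(x)+f_2(x)+f_3(x)$ has a nonempty set of solutions. For a function $g$ and $\gamma>0$, $\operatorname{prox}_{\gamma g}(z):=\operatorname{argmin}_{y}\{g(y)+\frac{1}{2\gamma}\|y-z\|^2\}$. Let $\gamma\in(0,\frac{1}{L_1+L_2})$ and $\alpha,\lambda>0$. For $(z_1,z_2)\in\mathbb R^d\times\mathbb R^d$ define $x_1=\operatorname{prox}_{\gamma f_1}(z_1)$, $x_2=\operatorname{prox}_{\frac{\gamma}{\alpha}f_2}(\frac{z_2}{\alpha}+x_1)$, $x_3\in\operatorname{prox}_{\gamma f_3}(x_1-z_1+x_2-z_2)$, and the set-valued operator $T_{\gamma}^{\mathrm{Ryu}}(z_1,z_2)=\{(z_1+\lambda(x_3-x_1),\,z_2+\lambda(x_3-x_2))\}$ over such choices of $x_3$. With $\gamma_1:=\frac{\gamma}{\alpha}$, $\gamma_2:=\frac{\gamma}{1-\alpha}$ (convention $c/0=\infty$, $d/\infty=0$), the relaxed Ryu envelope is $$\varphi_{\gamma}^{\mathrm{Ryu}}(z_1,z_2):=\min_{y\in\mathbb R^d}\Big\{f_3(y)+\sum_{i=1}^2\Big[f_i(x_i)+\langle y-x_i,\nabla f_i(x_i)\rangle+\tfrac{1}{2\gamma_i}\|y-x_i\|^2\Big]\Big\}.$$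 $\partial$ denotes the limiting subdifferential. *)

(* Defs.v *)
From mathcomp Require Import all_boot all_order all_algebra.
From mathcomp Require Import boolp classical_sets reals constructive_ereal ereal.
Set Implicit Arguments.
Unset Strict Implicit.
Unset Printing Implicit Defensive.
Import Order.TTheory GRing.Theory Num.Theory.
Local Open Scope ring_scope.
Local Open Scope classical_set_scope.

Section RyuDefs.
Variables (R : realType) (d : nat).
Local Notation vec := 'rV[R]_d.

Definition dotp (u v : vec) : R := \sum_(i < d) u 0 i * v 0 i.
Definition enorm (u : vec) : R := Num.sqrt (dotp u u).

Definition convex_fun (f : vec -> R) : Prop :=
  forall (x y : vec) (t : R), 0 <= t -> t <= 1 ->
    f (t *: x + (1 - t) *: y) <= t * f x + (1 - t) * f y.

Definition has_gradient (f : vec -> R) (g x : vec) : Prop :=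
  forall eps : R, 0 < eps -> exists2 delta : R, 0 < delta &
    forall y : vec, enorm (y - x) < delta ->
      `|f y - f x - dotp g (y - x)| <= eps * enorm (y - x).

Definition smooth_with (f : vec -> R) (grad : vec -> vec) (L : R) : Prop :=
  (forall x, has_gradient f (grad x) x) /\
  (forall x y, enorm (grad x - grad y) <= L * enorm (x - y)).

Definition proper_fun (g : vec -> \bar R) : Prop :=
  (forall x, g x <> -oo%E) /\ (exists x, g x <> +oo%E).

Definition lsc_fun (g : vec -> \bar R) : Prop :=
  forall (x : vec) (t : R), (t%:E < g x)%E ->
    exists2 delta : R, 0 < delta &
      forall y, enorm (y - x) < delta -> (t%:E < g y)%E.

(* prox_{gam g}(z) as the (possibly empty / multivalued) argmin set *)
Definition prox_e (g : vec -> \bar R) (gam : R) (z : vec) : set vec :=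
  [set y | forall y' : vec,
     (g y + (dotp (y - z) (y - z) / (2 * gam))%:E <=
      g y' + (dotp (y' - z) (y' - z) / (2 * gam))%:E)%E].

Definition prox (f : vec -> R) (gam : R) (z : vec) : set vec :=
  prox_e (fun y => (f y)%:E) gam z.

Definition seq_cvg (xs : nat -> vec) (x : vec) : Prop :=
  forall eps : R, 0 < eps -> exists N : nat, forall k : nat, (N <= k)%N ->
    enorm (xs k - x) < eps.

Definition frechet_subgrad (g : vec -> \bar R) (x v : vec) : Prop :=
  g x \is a fin_num /\
  forall eps : R, 0 < eps -> exists2 delta : R, 0 < delta &
    forall y, enorm (y - x) < delta ->
      ((fine (g x) + dotp v (y - x) - eps * enorm (y - x))%:E <= g y)%E.

Definition limiting_subgrad (g : vec -> \bar R) (x v : vec) : Prop :=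
  g x \is a fin_num /\
  exists (xs vs : nat -> vec),
    (forall k, frechet_subgrad g (xs k) (vs k)) /\
    seq_cvg xs x /\ seq_cvg vs v /\
    (forall eps : R, 0 < eps -> exists N : nat, forall k : nat, (N <= k)%N ->
       `|fine (g (xs k)) - fine (g x)| < eps).

Definition phi (f1 f2 : vec -> R) (f3 : vec -> \bar R) (x : vec) : \bar R :=
  ((f1 x)%:E + (f2 x)%:E + f3 x)%E.

Definition ryu_T (f1 f2 : vec -> R) (f3 : vec -> \bar R) (gam alpha lam : R)
  (z : vec * vec) : set (vec * vec) :=
  [set p | exists x1 x2 x3 : vec,
     prox f1 gam z.1 x1 /\
     prox f2 (gam / alpha) (alpha^-1 *: z.2 + x1) x2 /\
     prox_e f3 gam (x1 - z.1 + x2 - z.2) x3 /\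
     p = (z.1 + lam *: (x3 - x1), z.2 + lam *: (x3 - x2))].

Definition fixpoints (T : vec * vec -> set (vec * vec)) : set (vec * vec) :=
  [set z | T z z].

(* relaxed Ryu envelope, evaluated at the prox points x1 = x1(z), x2 = x2(z);
   1/(2 gam_1) = alpha/(2 gam), 1/(2 gam_2) = (1 - alpha)/(2 gam)
   (consistent with the conventions c/0 = oo, d/oo = 0). *)
Definition ryu_env (f1 f2 : vec -> R) (f3 : vec -> \bar R) (grad1 grad2 : vec -> vec)
  (gam alpha : R) (x1 x2 : vec) : \bar R :=
  ereal_inf [set (f3 y +
     (f1 x1 + dotp (y - x1) (grad1 x1) + alpha / (2 * gam) * dotp (y - x1) (y - x1)
      + (f2 x2 + dotp (y - x2) (grad2 x2)
         + (1 - alpha) / (2 * gam) * dotp (y - x2) (y - x2)))%:E)%E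
    | y in [set: vec]].

End RyuDefs.

(* Main.v *)
Require Import Defs.
From mathcomp Require Import all_boot all_order all_algebra.
From mathcomp Require Import boolp classical_sets reals constructive_ereal ereal.
From mathcomp Require Import ring lra.
Import Order.TTheory GRing.Theory Num.Theory.
Local Open Scope ring_scope.
Local Open Scope classical_set_scope.

Section Vec.
Variables (R : realType) (d : nat).
Local Notation vec := 'rV[R]_d.
Implicit Types u v w : vec.

Lemma dotpC u v : dotp u v = dotp v u.
Proof. by apply: eq_bigr => i _; rewrite mulrC. Qed.
Lemma dotpDl u v w : dotp (u + v) w = dotp u w + dotp v w.
Proof. by rewrite /dotp -big_split; apply: eq_bigr => i _; rewrite !mxE mulrDl. Qed.
Lemma dotpZl a u w : dotp (a *: u) w = a * dotp u w.
Proof. by rewrite /dotp mulr_sumr; apply: eq_bigr => i _; rewrite !mxE mulrA. Qed.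
Lemma dotpNl u w : dotp (- u) w = - dotp u w.
Proof. by rewrite /dotp -sumrN; apply: eq_bigr => i _; rewrite !mxE mulNr. Qed.
Lemma dotpBl u v w : dotp (u - v) w = dotp u w - dotp v w.
Proof. by rewrite dotpDl dotpNl. Qed.
Lemma dotpDr u v w : dotp w (u + v) = dotp w u + dotp w v.
Proof. by rewrite !(dotpC w) dotpDl. Qed.
Lemma dotpZr a u w : dotp w (a *: u) = a * dotp w u.
Proof. by rewrite !(dotpC w) dotpZl. Qed.
Lemma dotpNr u w : dotp w (- u) = - dotp w u.
Proof. by rewrite !(dotpC w) dotpNl. Qed.
Lemma dotpBr u v w : dotp w (u - v) = dotp w u - dotp w v.
Proof. by rewrite dotpDr dotpNr. Qed.
Lemma dotp0l w : dotp 0 w = 0.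
Proof. by rewrite /dotp big1 // => i _; rewrite mxE mul0r. Qed.
Lemma dotp0r w : dotp w 0 = 0.
Proof. by rewrite dotpC dotp0l. Qed.
Lemma dotp_ge0 u : 0 <= dotp u u.
Proof. by apply: sumr_ge0 => i _; rewrite -expr2 sqr_ge0. Qed.
Lemma dotp_eq0 u : dotp u u = 0 -> u = 0.
Proof.
move=> /eqP; rewrite psumr_eq0 => [/allP H|i _]; last by rewrite -expr2 sqr_ge0.
apply/rowP => i; rewrite mxE; have := H i (mem_index_enum i).
by rewrite /= mulf_eq0 orbb => /eqP.
Qed.
Lemma enorm_ge0 u : 0 <= enorm u.
Proof. exact: sqrtr_ge0. Qed.
Lemma enorm_sqr u : enorm u ^+ 2 = dotp u u.
Proof. by rewrite sqr_sqrtr // dotp_ge0. Qed.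
Lemma enormZ a u : enorm (a *: u) = `|a| * enorm u.
Proof.
by rewrite /enorm dotpZl dotpZr mulrA -expr2 sqrtrM ?sqr_ge0 // sqrtr_sqr.
Qed.
Lemma enorm_le_sqr u v (b : R) : 0 <= b -> enorm u <= b * enorm v ->
  dotp u u <= b ^+ 2 * dotp v v.
Proof.
move=> b0 H; rewrite -!enorm_sqr -exprMn.
by rewrite ler_pXn2r // ?nnegrE ?enorm_ge0 ?mulr_ge0 ?enorm_ge0.
Qed.
Lemma enorm_lt u (e : R) : 0 < e -> dotp u u < e ^+ 2 -> enorm u < e.
Proof.
move=> e0 H; rewrite /enorm -(@ger0_norm _ e) ?ltW // -sqrtr_sqr ltr_sqrt //.
by rewrite exprn_gt0.
Qed.
Lemma dotp_young u v (c : R) : 0 < c -> dotp u v <= (dotp u u / c + c * dotp v v) / 2.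
Proof.
move=> c0; have := dotp_ge0 (u - c *: v).
rewrite !dotpBl !dotpBr !dotpZl !dotpZr (dotpC v u) => H.
have H2 : 2 * c * dotp u v <= dotp u u + c ^+ 2 * dotp v v by lra.
rewrite ler_pdivlMr //.
have -> : (dotp u u / c + c * dotp v v) = (dotp u u + c ^+ 2 * dotp v v) / c.
  by field; rewrite gt_eqF.
rewrite ler_pdivlMr //; lra.
Qed.

Lemma small_t (a b nu : R) : 0 < a -> 0 < b -> 0 <= nu ->
  exists t, [/\ 0 < t, t <= a & t * nu < b].
Proof.
move=> a0 b0 nu0; exists (Num.min a (b / (nu + 1))); split.
- by rewrite lt_min a0 divr_gt0 // ltr_wpDl.
- by rewrite ge_min lexx.
- have h : Num.min a (b / (nu + 1)) <= b / (nu + 1) by rewrite ge_min lexx orbT.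
  have hp : 0 < Num.min a (b / (nu + 1)) by rewrite lt_min a0 divr_gt0 // ltr_wpDl.
  apply: (@le_lt_trans _ _ (b / (nu + 1) * nu)); first by rewrite ler_wpM2r.
  rewrite mulrAC ltr_pdivrMr ?ltr_wpDl //; nra.
Qed.

Lemma addKr' (y a : vec) : y + a - y = a.
Proof. by rewrite addrAC subrr add0r. Qed.

Lemma conv_comb (x y : vec) (t : R) : t *: x + (1 - t) *: y = y + t *: (x - y).
Proof. by rewrite scalerBl scale1r scalerBr addrCA. Qed.

Lemma grad_ineq (f : vec -> R) (g x y : vec) : convex_fun f -> has_gradient f g y ->
  f y + dotp g (x - y) <= f x.
Proof.
move=> cf hg; set u := x - y; set nu := enorm u; set D := dotp g u.
have nu0 : 0 <= nu := enorm_ge0 u.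
apply/ler_addgt0Pr => e e0.
have [delta d0 Hd] := hg (e / (nu + 1)) (divr_gt0 e0 (ltr_wpDl nu0 ltr01)).
have [t [t0 t1 tn]] := small_t 1 delta nu ltr01 d0 nu0.
have Hc := cf x y t (ltW t0) t1; rewrite conv_comb -/u in Hc.
have : enorm (y + t *: u - y) < delta by rewrite addKr' enormZ (gtr0_norm t0).
move=> /Hd; rewrite addKr' enormZ (gtr0_norm t0) dotpZr -/D -/nu => H.
have H1 : t * D - e / (nu + 1) * (t * nu) <= f (y + t *: u) - f y.
  by move: H => /ler_normlP [+ _]; lra.
have H2 : t * (D - e / (nu + 1) * nu - (f x - f y)) <= 0.
  have -> : t * (D - e / (nu + 1) * nu - (f x - f y)) =
     (t * D - e / (nu + 1) * (t * nu)) - (t * f x + (1 - t) * f y - f y).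
    by ring.
  lra.
have H3 : D - e / (nu + 1) * nu - (f x - f y) <= 0.
  by move: H2; rewrite pmulr_rle0.
have H4 : e / (nu + 1) * nu <= e.
  rewrite mulrAC ler_pdivrMr ?ltr_wpDl //; nra.
lra.
Qed.

Lemma prox_grad (f : vec -> R) (g x z : vec) (s : R) : 0 < s ->
  has_gradient f g x -> prox f s z x -> z - x = s *: g.
Proof.
move=> s0 hg hp.
set u := g + s^-1 *: (x - z).
suff u0 : u = 0.
  have : s *: u = 0 by rewrite u0 scaler0.
  rewrite /u scalerDr scalerA mulfV ?gt_eqF // scale1r => /eqP.
  by rewrite addr_eq0 opprB => /eqP ->.
apply: dotp_eq0; set U := dotp u u.
apply/eqP; rewrite eq_le dotp_ge0 andbT leNgt; apply/negP => U0.
set nu := enorm u.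
have nu0 : 0 <= nu := enorm_ge0 u.
have nuU : nu ^+ 2 = U := enorm_sqr u.
have nup : 0 < nu by nra.
have [delta d0 Hd] := hg (nu / 4) (divr_gt0 nup (ltr0Sn _ 3)).
have [t [t0 ts tn]] := small_t (s / 2) delta nu (divr_gt0 s0 (ltr0Sn _ 1)) d0 nu0.
set y := x + (- t) *: u.
have : enorm (y - x) < delta by rewrite addKr' enormZ normrN (gtr0_norm t0).
move=> /Hd; rewrite addKr' enormZ normrN (gtr0_norm t0) dotpZr => /ler_normlP [_ H].
have := hp y; rewrite -!EFinD lee_fin.
have -> : y - z = (x - z) + (- t) *: u by rewrite /y addrAC.
rewrite (dotpDl (x - z) ((-t) *: u)) (dotpDr (x - z) ((-t) *: u) (x - z)).
rewrite (dotpDr (x - z) ((-t) *: u) ((-t) *: u)) !dotpZl !dotpZr (dotpC u (x - z)).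
set A := dotp (x - z) (x - z); set a := dotp (x - z) u.
have Ub : U = dotp g u + s^-1 * a by rewrite /U {1}/u dotpDl dotpZl.
set b := dotp g u in H Ub.
set w := s^-1.
have sw : s * w = 1 by rewrite mulfV ?gt_eqF.
have w0 : 0 < w by rewrite invr_gt0.
rewrite -/w => Hp.
have E1 : (A + - t * a + (- t * a + - t * (- t * U))) / (2 * s) = A * w / 2 - t * a * w + t * t * U * w / 2.
  by rewrite /w; field; rewrite gt_eqF.
have E2 : A / (2 * s) = A * w / 2 by rewrite /w; field; rewrite gt_eqF.
rewrite -/U in Hp; rewrite E1 E2 in Hp.
have Hnu : nu / 4 * (t * nu) = t * U / 4 by rewrite -nuU; field.
rewrite -/nu Hnu in H.
have tw : t * w <= 1 / 2.
  have : t * w <= s / 2 * w by rewrite ler_wpM2r // ltW.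
  by rewrite mulrAC sw mul1r.
have E3 : t * t * U * w / 2 <= t * U / 4.
  have : t * w * (t * U) <= 1 / 2 * (t * U) by rewrite ler_wpM2r // ?mulr_ge0 // ltW.
  move=> h; have -> : t * t * U * w / 2 = t * w * (t * U) / 2 by ring.
  lra.
have Ua : t * U = t * b + t * w * a by rewrite Ub /w; ring.
have : 0 < t * U by rewrite mulr_gt0.
lra.
Qed.

Lemma descent_step (f : vec -> R) (g : vec -> vec) (L : R) (x v : vec) (s t : R) :
  convex_fun f -> smooth_with f g L -> 0 < L -> 0 <= s -> s < t ->
  f (x + t *: v) - f (x + s *: v) <= (t - s) * (dotp (g x) v + L * t * dotp v v).
Proof.
move=> cf [hg hL] L0 s0 st.
have t0 : 0 < t by apply: le_lt_trans st.
have C := @grad_ineq f _ (x + s *: v) _ cf (hg (x + t *: v)).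
have E : x + s *: v - (x + t *: v) = (s - t) *: v.
  by rewrite opprD addrACA subrr add0r -scalerBl.
rewrite E dotpZr in C.
set G := g (x + t *: v) in C *.
set a := G - g x.
have EG : dotp G v = dotp (g x) v + dotp a v.
  by rewrite -dotpDl /a addrCA subrr addr0.
have hl := hL (x + t *: v) x; rewrite addKr' enormZ (gtr0_norm t0) mulrA -/G -/a in hl.
have Lt0 : 0 < L * t by rewrite mulr_gt0.
have ha := @enorm_le_sqr a v (L * t) (ltW Lt0) hl.
have hy := @dotp_young a v (L * t) Lt0.
have h2 : dotp a a / (L * t) <= L * t * dotp v v.
  rewrite ler_pdivrMr //; move: ha; rewrite expr2.
  by have -> : L * t * dotp v v * (L * t) = L * t * (L * t) * dotp v v by ring.
have h3 : dotp a v <= L * t * dotp v v by lra.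
have h4 : (t - s) * dotp a v <= (t - s) * (L * t * dotp v v).
  by rewrite ler_wpM2l // subr_ge0 ltW.
rewrite EG in C.
have -> : (t - s) * (dotp (g x) v + L * t * dotp v v) =
   (t - s) * dotp (g x) v + (t - s) * (L * t * dotp v v) by ring.
have EC : (s - t) * (dotp (g x) v + dotp a v) = - ((t - s) * dotp (g x) v) - (t - s) * dotp a v by ring.
rewrite EC in C.
lra.
Qed.

Lemma descent (f : vec -> R) (g : vec -> vec) (L : R) (x y : vec) :
  convex_fun f -> smooth_with f g L -> 0 < L ->
  f y <= f x + dotp (y - x) (g x) + L / 2 * dotp (y - x) (y - x).
Proof.
move=> cf sm L0; rewrite (dotpC (y - x)).
set v := y - x; set D := dotp (g x) v; set V := dotp v v.
have V0 : 0 <= V := dotp_ge0 v.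
have key : forall n : nat, (0 < n)%N ->
    f y - f x <= D + L * V / 2 + L * V / (2 * n%:R).
  move=> n n0.
  have N0 : 0 < (n%:R : R) by rewrite ltr0n.
  have ind : forall k, (k <= n)%N -> f (x + (k%:R / n%:R) *: v) - f x <=
      k%:R / n%:R * D + L * V * (k%:R * (k%:R + 1)) / (2 * n%:R ^+ 2).
    elim=> [_|k IH Hk].
      rewrite mul0r scale0r addr0 subrr !mul0r mulr0 mul0r addr0 //.
    have := IH (ltnW Hk).
    have := @descent_step f g L x v (k%:R / n%:R) (k.+1%:R / n%:R) cf sm L0
       (divr_ge0 (ler0n _ _) (ltW N0)).
    rewrite ltr_pM2r ?invr_gt0 // ltr_nat ltnSn => /(_ isT).
    rewrite -[k.+1%:R]natr1 -/D -/V => h1 h2.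
    have -> : (k%:R + 1) / n%:R * D + L * V * ((k%:R + 1) * (k%:R + 1 + 1)) / (2 * n%:R ^+ 2)
      = (k%:R / n%:R * D + L * V * (k%:R * (k%:R + 1)) / (2 * n%:R ^+ 2)) +
        ((k%:R + 1) / n%:R - k%:R / n%:R) * (D + L * ((k%:R + 1) / n%:R) * V).
      by field; rewrite gt_eqF.
    lra.
  have := ind n (leqnn n).
  rewrite divff ?gt_eqF // scale1r /v addrCA subrr addr0.
  have -> : (1 * D + L * V * (n%:R * (n%:R + 1)) / (2 * n%:R ^+ 2)) =
      D + L * V / 2 + L * V / (2 * n%:R) by field; rewrite gt_eqF.
  by [].
suff : f y - f x <= D + L / 2 * V by lra.
apply/ler_addgt0Pr => e e0.
set m := (Num.truncn (L * V / (2 * e))).+1.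
have hm := @truncnS_gt _ (L * V / (2 * e)).
have M0 : 0 < (m%:R : R) by rewrite ltr0n.
have h := key m isT.
have : L * V / (2 * m%:R) <= e.
  rewrite ler_pdivrMr ?mulr_gt0 //.
  move: hm; rewrite -/m ltr_pdivrMr ?mulr_gt0 // => hm.
  nra.
have -> : L / 2 * V = L * V / 2 by field.
lra.
Qed.

Lemma sqD (a b : vec) : dotp (a + b) (a + b) = dotp a a + 2 * dotp a b + dotp b b.
Proof. rewrite dotpDl !dotpDr (dotpC b a); ring. Qed.

Lemma sqZ (c : R) (a : vec) : dotp (c *: a) (c *: a) = c ^+ 2 * dotp a a.
Proof. by rewrite dotpZl dotpZr mulrA expr2. Qed.

Lemma qexp (x y G : vec) (gam : R) : 0 < gam ->
  dotp (y - (x - gam *: G)) (y - (x - gam *: G)) / (2 * gam) =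
  dotp (y - x) (y - x) / (2 * gam) + dotp (y - x) G + gam * dotp G G / 2.
Proof.
move=> g0.
have -> : y - (x - gam *: G) = (y - x) + gam *: G by rewrite opprB addrCA addrC.
by rewrite sqD sqZ dotpZr; field; rewrite gt_eqF.
Qed.

Lemma enorm0 : enorm (0 : vec) = 0.
Proof. by rewrite /enorm dotp0l sqrtr0. Qed.

Lemma prox_of_grad (f : vec -> R) (g x : vec) (s : R) : 0 < s ->
  convex_fun f -> has_gradient f g x -> prox f s (x + s *: g) x.
Proof.
move=> s0 cf hg y; rewrite -!EFinD lee_fin.
have -> : x - (x + s *: g) = (- s) *: g by rewrite opprD addrA subrr add0r scaleNr.
have -> : y - (x + s *: g) = (y - x) + (- s) *: g by rewrite scaleNr opprD addrA.
rewrite sqD !sqZ dotpZr.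
have := @grad_ineq f g y x cf hg; rewrite dotpC.
have W0 := dotp_ge0 (y - x).
have E1 : (- s) ^+ 2 * dotp g g / (2 * s) = s * dotp g g / 2.
  by field; rewrite gt_eqF.
have E2 : (dotp (y - x) (y - x) + 2 * (- s * dotp (y - x) g) + (- s) ^+ 2 * dotp g g) / (2 * s)
   = dotp (y - x) (y - x) / (2 * s) - dotp (y - x) g + s * dotp g g / 2.
  by field; rewrite gt_eqF.
rewrite E1 E2.
have : 0 <= dotp (y - x) (y - x) / (2 * s) by rewrite divr_ge0 // mulr_ge0 // ltW.
lra.
Qed.

Lemma subBB (a b c : vec) : (a - b) - (a - c) = c - b.
Proof. by rewrite opprB addrC addrA subrK. Qed.

Lemma prox_unique (f : vec -> R) (g : vec -> vec) (L s : R) (z x x' : vec) :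
  0 < s -> convex_fun f -> smooth_with f g L ->
  prox f s z x -> prox f s z x' -> x = x'.
Proof.
move=> s0 cf [hg _] px px'.
have e1 := @prox_grad f (g x) x z s s0 (hg x) px.
have e2 := @prox_grad f (g x') x' z s s0 (hg x') px'.
have h1 := @grad_ineq f (g x) x' x cf (hg x).
have h2 := @grad_ineq f (g x') x x' cf (hg x').
set e := x - x'.
have Ee : e = s *: (g x' - g x).
  by rewrite scalerBr -e2 -e1 subBB.
have Ex : x' - x = - e by rewrite /e opprB.
rewrite Ex dotpNr in h1.
have : dotp e e = s * (dotp (g x') e - dotp (g x) e).
  by rewrite {2}Ee dotpZr dotpBr (dotpC e) (dotpC e).
move=> E.
have : dotp e e <= 0.
  rewrite E; apply: mulr_ge0_le0; [exact: ltW | lra].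
move=> h; apply/eqP; rewrite -subr_eq0; apply/eqP/dotp_eq0.
by apply/le_anti; rewrite h dotp_ge0.
Qed.

Lemma prox3_core (f3 : vec -> \bar R) (gam : R) (x G : vec) : 0 < gam ->
  proper_fun f3 -> prox_e f3 gam (x - gam *: G) x ->
  exists r, f3 x = r%:E /\ forall y s, f3 y = s%:E ->
    r <= s + dotp (y - x) G + dotp (y - x) (y - x) / (2 * gam).
Proof.
move=> g0 [nm [x0 fx0]] hp.
case Ex: (f3 x) => [r| |]; last by have := nm x; rewrite Ex.
- exists r; split => // y s Ey.
  have := hp y; rewrite Ex Ey !qexp // -!EFinD lee_fin subrr !dotp0l mul0r.
  lra.
- have := hp x0; rewrite Ex.
  case Ex0: (f3 x0) => [r0| |]; last by have := nm x0; rewrite Ex0.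
  + by rewrite -EFinD leye_eq.
  + by rewrite Ex0 in fx0.
Qed.

Lemma prox3_intro (f3 : vec -> \bar R) (gam r : R) (x G : vec) : 0 < gam ->
  (forall y, f3 y <> -oo%E) -> f3 x = r%:E ->
  (forall y s, f3 y = s%:E ->
    r <= s + dotp (y - x) G + dotp (y - x) (y - x) / (2 * gam)) ->
  prox_e f3 gam (x - gam *: G) x.
Proof.
move=> g0 nm Ex H y; rewrite !qexp // Ex subrr !dotp0l mul0r.
case Ey: (f3 y) => [s| |]; last by have := nm y; rewrite Ey.
- rewrite -!EFinD lee_fin; have := H y s Ey; lra.
- by rewrite leey.
Qed.

Lemma env_eq (f1 f2 : vec -> R) (f3 : vec -> \bar R) (g1 g2 : vec -> vec)
  (gam alpha : R) (x : vec) :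
  0 < gam -> proper_fun f3 -> prox_e f3 gam (x - gam *: (g1 x + g2 x)) x ->
  phi f1 f2 f3 x = ryu_env f1 f2 f3 g1 g2 gam alpha x x.
Proof.
move=> g0 pf hp; have [r [Ex H]] := @prox3_core f3 gam x _ g0 pf hp.
apply/le_anti/andP; split.
- apply: le_ereal_inf_tmp => _ [y _ <-].
  case Ey: (f3 y) => [s| |]; last by have := pf.1 y; rewrite Ey.
  + rewrite /phi Ex -!EFinD lee_fin; have := H y s Ey; rewrite dotpDr.
    have E : alpha / (2 * gam) * dotp (y - x) (y - x) +
      (1 - alpha) / (2 * gam) * dotp (y - x) (y - x) = dotp (y - x) (y - x) / (2 * gam).
      by field; rewrite gt_eqF.
    lra.
  + by rewrite leey.
- apply: ereal_inf_lbound; exists x => //.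
  rewrite subrr !dotp0l !mulr0 /phi Ex -!EFinD; apply: congr1; ring.
Qed.

Lemma limiting_phi (f1 f2 : vec -> R) (f3 : vec -> \bar R) (g1 g2 : vec -> vec)
  (gam : R) (x : vec) :
  0 < gam -> convex_fun f1 -> convex_fun f2 ->
  has_gradient f1 (g1 x) x -> has_gradient f2 (g2 x) x ->
  proper_fun f3 -> prox_e f3 gam (x - gam *: (g1 x + g2 x)) x ->
  limiting_subgrad (phi f1 f2 f3) x 0.
Proof.
move=> g0 c1 c2 hg1 hg2 pf hp; have [r [Ex H]] := @prox3_core f3 gam x _ g0 pf hp.
have fin : phi f1 f2 f3 x \is a fin_num by rewrite /phi Ex -!EFinD.
split => //; exists (fun=> x), (fun=> 0); split; [|split; [|split]].
- move=> k; split => // eps e0; exists (2 * gam * eps); first by rewrite !mulr_gt0.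
  move=> y hy; rewrite /phi Ex dotp0l.
  case Ey: (f3 y) => [s| |]; last by have := pf.1 y; rewrite Ey.
  + rewrite -!EFinD /= lee_fin.
    have h1 := @grad_ineq f1 (g1 x) y x c1 hg1.
    have h2 := @grad_ineq f2 (g2 x) y x c2 hg2.
    have := H y s Ey; rewrite dotpDr (dotpC (y - x)) (dotpC (y - x) (g2 x)).
    have nu0 := enorm_ge0 (y - x).
    have W := enorm_sqr (y - x).
    have h3 : dotp (y - x) (y - x) / (2 * gam) <= eps * enorm (y - x).
      rewrite ler_pdivrMr ?mulr_gt0 // -W; nra.
    lra.
  + by rewrite addey // leey.
- by move=> e e0; exists 0%N => k _; rewrite subrr enorm0.
- by move=> e e0; exists 0%N => k _; rewrite subrr enorm0.
- by move=> e e0; exists 0%N => k _; rewrite subrr normr0.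
Qed.

Lemma vecid (x a b : vec) : x - (a + x) + x - b = x - (a + b).
Proof.
by rewrite (addrC a x) opprD addrA subrr add0r opprD addrA (addrC (- a) x).
Qed.
End Vec.

Theorem proposition4 (R : realType) (d : nat)
  (f1 f2 : 'rV[R]_d -> R) (f3 : 'rV[R]_d -> \bar R)
  (grad1 grad2 : 'rV[R]_d -> 'rV[R]_d) (L1 L2 gam alpha lam : R) :
  convex_fun f1 -> convex_fun f2 ->
  0 < L1 -> 0 < L2 ->
  smooth_with f1 grad1 L1 -> smooth_with f2 grad2 L2 ->
  proper_fun f3 -> lsc_fun f3 ->
  (exists xs : 'rV[R]_d, forall x, (phi f1 f2 f3 xs <= phi f1 f2 f3 x)%E) ->
  0 < gam -> gam < (L1 + L2)^-1 -> 0 < alpha -> 0 < lam ->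
  (forall z1 z2 x1 x2 : 'rV[R]_d,
     prox f1 gam z1 x1 ->
     prox f2 (gam / alpha) (alpha^-1 *: z2 + x1) x2 ->
     (fixpoints (ryu_T f1 f2 f3 gam alpha lam) (z1, z2) <->
        exists x3, prox_e f3 gam (x1 - z1 + x2 - z2) x3 /\ x1 = x2 /\ x2 = x3)
     /\
     (forall x3, prox_e f3 gam (x1 - z1 + x2 - z2) x3 -> x1 = x2 -> x2 = x3 ->
        limiting_subgrad (phi f1 f2 f3) x1 0 /\
        phi f1 f2 f3 x1 = ryu_env f1 f2 f3 grad1 grad2 gam alpha x1 x2))
  /\
  (0 < alpha -> alpha < 1 -> gam <= Num.min (alpha / L1) ((1 - alpha) / L2) ->
   forall xs : 'rV[R]_d, (forall x, (phi f1 f2 f3 xs <= phi f1 f2 f3 x)%E) ->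
     (forall z1 z2 x1 x2 : 'rV[R]_d,
        prox f1 gam z1 x1 ->
        prox f2 (gam / alpha) (alpha^-1 *: z2 + x1) x2 ->
        (phi f1 f2 f3 xs <= ryu_env f1 f2 f3 grad1 grad2 gam alpha x1 x2)%E)
     /\
     (exists z1 z2 x1 x2 : 'rV[R]_d,
        prox f1 gam z1 x1 /\
        prox f2 (gam / alpha) (alpha^-1 *: z2 + x1) x2 /\
        ryu_env f1 f2 f3 grad1 grad2 gam alpha x1 x2 = phi f1 f2 f3 xs)).
Proof.
move=> c1 c2 L10 L20 sm1 sm2 pf _ _ g0 gL a0 lam0.
have gL1 : gam * (L1 + L2) < 1 by rewrite -ltr_pdivlMr ?addr_gt0 // mul1r.
have ga0 : 0 < gam / alpha by rewrite divr_gt0.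
split.
- move=> z1 z2 x1 x2 p1 p2; split.
  + split.
    * rewrite /fixpoints /ryu_T /= => -[x1' [x2' [x3 [p1' [p2' [p3 E]]]]]].
      case: E => E1 E2.
      have : lam *: (x3 - x1') = 0 by apply: (addrI z1); rewrite addr0 -E1.
      move/eqP; rewrite scaler_eq0 gt_eqF //= subr_eq0 => /eqP e31.
      have : lam *: (x3 - x2') = 0 by apply: (addrI z2); rewrite addr0 -E2.
      move/eqP; rewrite scaler_eq0 gt_eqF //= subr_eq0 => /eqP e32.
      have e11 := @prox_unique _ _ f1 grad1 L1 gam z1 x1' x1 g0 c1 sm1 p1' p1.
      rewrite e11 in p2' p3 e31.
      have e22 := @prox_unique _ _ f2 grad2 L2 (gam / alpha) _ x2' x2 ga0 c2 sm2 p2' p2.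
      rewrite e22 in p3 e32.
      exists x3; split => //; split; [by rewrite -e31 -e32 | by rewrite e32].
    * move=> [x3 [p3 [e12 e23]]]; rewrite /fixpoints /ryu_T /=.
      exists x1, x2, x3; do !split => //.
      by rewrite -e23 -e12 subrr scaler0 !addr0.
  + move=> x3 p3 e12 e23; subst x3; subst x2.
    have ez1 := @prox_grad _ _ f1 (grad1 x1) x1 z1 gam g0 (sm1.1 x1) p1.
    have ez2 := @prox_grad _ _ f2 (grad2 x1) x1 _ (gam / alpha) ga0 (sm2.1 x1) p2.
    have ez2' : z2 = gam *: grad2 x1.
      have : alpha *: (alpha^-1 *: z2) = alpha *: ((gam / alpha) *: grad2 x1).
        by rewrite -ez2 addrK.
      by rewrite !scalerA mulfV ?gt_eqF // scale1r mulrCA mulfV ?gt_eqF // mulr1.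
    have ez1' : z1 = gam *: grad1 x1 + x1 by rewrite -ez1 subrK.
    have Ew : x1 - z1 + x1 - z2 = x1 - gam *: (grad1 x1 + grad2 x1).
      by rewrite ez1' ez2' vecid scalerDr.
    rewrite Ew in p3; split.
    * exact: (@limiting_phi _ _ f1 f2 f3 grad1 grad2 gam x1 g0 c1 c2 (sm1.1 x1) (sm2.1 x1) pf p3).
    * exact: env_eq.
- move=> _ a1 gmin xs hxs.
  move: gmin; rewrite le_min => /andP [gm1 gm2].
  have gle1 : gam * L1 <= alpha by rewrite -ler_pdivlMr.
  have gle2 : gam * L2 <= 1 - alpha by rewrite -ler_pdivlMr.
  split.
  + move=> z1 z2 x1 x2 _ _; apply: le_ereal_inf_tmp => _ [y _ <-].
    apply: le_trans (hxs y) _; rewrite /phi.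
    case Ey: (f3 y) => [s| |]; last by have := pf.1 y; rewrite Ey.
    * rewrite -!EFinD lee_fin.
      have h1 := @descent _ _ f1 grad1 L1 x1 y c1 sm1 L10.
      have h2 := @descent _ _ f2 grad2 L2 x2 y c2 sm2 L20.
      have W1 := @dotp_ge0 _ _ (y - x1); have W2 := @dotp_ge0 _ _ (y - x2).
      have k1 : L1 / 2 <= alpha / (2 * gam).
        rewrite ler_pdivlMr ?mulr_gt0 //.
        by have -> : L1 / 2 * (2 * gam) = gam * L1 by field.
      have k2 : L2 / 2 <= (1 - alpha) / (2 * gam).
        rewrite ler_pdivlMr ?mulr_gt0 //.
        by have -> : L2 / 2 * (2 * gam) = gam * L2 by field.
      have k1' := ler_wpM2r W1 k1; have k2' := ler_wpM2r W2 k2.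
      lra.
    * by rewrite addye // leey.
  + exists (xs + gam *: grad1 xs), (gam *: grad2 xs), xs, xs; split; [|split].
    * exact: (@prox_of_grad _ _ f1 (grad1 xs) xs gam g0 c1 (sm1.1 xs)).
    * rewrite scalerA (mulrC alpha^-1) (addrC _ xs).
      exact: (@prox_of_grad _ _ f2 (grad2 xs) xs (gam / alpha) ga0 c2 (sm2.1 xs)).
    * symmetry; apply: env_eq => //.
      case Exs: (f3 xs) => [r| |]; last by have := pf.1 xs; rewrite Exs.
      - apply: (@prox3_intro _ _ f3 gam r xs _ g0 pf.1 Exs) => y s Ey.
        have := hxs y; rewrite /phi Exs Ey -!EFinD lee_fin => hy.
        have h1 := @descent _ _ f1 grad1 L1 xs y c1 sm1 L10.
        have h2 := @descent _ _ f2 grad2 L2 xs y c2 sm2 L20.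
        have W := @dotp_ge0 _ _ (y - xs).
        have k : L1 / 2 * dotp (y - xs) (y - xs) + L2 / 2 * dotp (y - xs) (y - xs)
            <= dotp (y - xs) (y - xs) / (2 * gam).
          have -> : L1 / 2 * dotp (y - xs) (y - xs) + L2 / 2 * dotp (y - xs) (y - xs)
              = gam * (L1 + L2) * (dotp (y - xs) (y - xs) / (2 * gam)).
            by field; rewrite gt_eqF.
          rewrite -[X in _ <= X]mul1r; apply: (ler_wpM2r _ (ltW gL1)).
          by apply: divr_ge0 => //; apply: ltW; rewrite mulr_gt0.
        rewrite (@dotpDr _ _ (grad1 xs)); lra.
      - have [x0 fx0] := pf.2.
        have := hxs x0; rewrite /phi Exs addey // leye_eq.
        case Ex0: (f3 x0) => [r0| |]; last by have := pf.1 x0; rewrite Ex0.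
        + by rewrite -!EFinD.
        + by rewrite Ex0 in fx0.
Qed.
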